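(* Let $\rho>0$, $\theta\ge0$, let $\mathfrak{L}\in C^2[A,\infty)$ with $\lim_{u\to\infty}\mathfrak L(u)=\infty$ and $\mathfrak L'\in NRV_{-1}$, let $\boldsymbol L_f$ be a normalised slowly varying function, and let $\mathfrak K\in NRV_\theta(0+)$ (nondecreasing near $0$ if $\theta=0$). Then there is $\beta>0$ such that $\Phi:(0,\beta)\to\mathbb{R}$ is well defined by \[\int_{\Phi(t)}^\infty \frac{[\mathfrak{L}'(y)]^{1/2}}{y^{\frac{\rho+1}{2}}[\boldsymbol{L}_f(y)]^{1/2}}\,dy=\int_0^t\mathfrak{K}(s)\,ds,\qquad t\in(0,\beta),\] and $\Phi\in C^2(0,\beta)$, $\lim_{t\to0^+}\Phi(t)=\infty$, $\Phi\in NRV_{-2(\theta+1)/\rho}(0+)$. Moreover, for every integer $m\ge1$, \[\lim_{t\to0^+}\frac{\log_m\Phi(t)}{\log_m(1/t)}=\begin{cases}\frac{2(1+\theta)}{\rho},& m=1,\\1,&m\ge2,\end{cases}\] and \[\lim_{t\to0^+}\frac{\Phi(t)\Phi''(t)}{[\Phi'(t)]^2}=1+\frac{\rho}{2(\theta+1)},\qquad \lim_{t\to0^+}\frac{\mathfrak L(\Phi(t))}{\mathfrak L'(\Phi(t))}\cdot\frac{\Phi(t)}{[\Phi'(t)]^2}=0.\]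
   Context: $\log_m$ is the $m$-fold iterate of $\log$. A normalised slowly varying function is a positive $C^1$ function $\widehat L$ on some $[B,\infty)$ with $\lim_{u\to\infty}u\widehat L'(u)/\widehat L(u)=0$. $R\in NRV_\rho$ means $R(u)=u^\rho\widehat L(u)$ for a normalised slowly varying $\widehat L$. $\mathfrak K\in NRV_\theta(0+)$ (resp. $\Phi\in NRV_\gamma(0+)$) means $u\mapsto\mathfrak K(1/u)\in NRV_{-\theta}$ (resp. $u\mapsto\Phi(1/u)\in NRV_{-\gamma}$). *)

(* Defs.v *)
From Stdlib Require Import Reals.
From Coquelicot Require Import Coquelicot.
Open Scope R_scope.

Definition log_iter (m : nat) (x : R) : R := Nat.iter m ln x.

Definition NSV_on (B : R) (L : R -> R) : Prop :=
  (forall u, B < u -> 0 < L u) /\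
  (forall u, B < u -> ex_derive L u /\ continuous (Derive L) u) /\
  is_lim (fun u => u * Derive L u / L u) p_infty 0.

Definition NSV (L : R -> R) : Prop := exists B, NSV_on B L.

Definition NRV (rho : R) (F : R -> R) : Prop :=
  exists B Lhat, NSV_on B Lhat /\ forall u, B < u -> F u = Rpower u rho * Lhat u.

(* K in NRV_theta(0+) : u |-> K(1/u) in NRV_{-theta} *)
Definition NRV0 (theta : R) (K : R -> R) : Prop :=
  NRV (- theta) (fun u => K (/ u)).

Definition C2_on (a : R) (b : Rbar) (f : R -> R) : Prop :=
  forall u, a < u -> Rbar_lt u b ->
    ex_derive f u /\ ex_derive (Derive f) u /\ continuous (Derive (Derive f)) u.

Definition integrand (rho : R) (LL Lf : R -> R) (x : R) : R :=
  sqrt (Derive LL x) / (Rpower x ((rho + 1) / 2) * sqrt (Lf x)).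

Definition defining_eq (rho : R) (LL Lf K : R -> R) (y t : R) : Prop :=
  exists I : R,
    is_RInt_gen (integrand rho LL Lf) (at_point y) (Rbar_locally p_infty) I /\
    is_RInt_gen K (at_right 0) (at_point t) I.

(* Main.v *)
Require Import Defs.
From Stdlib Require Import Reals Lra Lia Psatz ClassicalEpsilon.
From Coquelicot Require Import Coquelicot.
Open Scope R_scope.

Section Lims.
Context {T : Type} {F : (T -> Prop) -> Prop} {FF : Filter F}.

Lemma lim_plus (f g : T -> R) a b :
  filterlim f F (locally a) -> filterlim g F (locally b) ->
  filterlim (fun x => f x + g x) F (locally (a + b)).
Proof.
  intros Hf Hg. eapply filterlim_comp_2; [exact Hf|exact Hg|].
  apply (filterlim_plus a b).
Qed.

Lemma lim_mult (f g : T -> R) a b :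
  filterlim f F (locally a) -> filterlim g F (locally b) ->
  filterlim (fun x => f x * g x) F (locally (a * b)).
Proof.
  intros Hf Hg. eapply filterlim_comp_2; [exact Hf|exact Hg|].
  apply (filterlim_mult a b).
Qed.

Lemma lim_const (c : R) : filterlim (fun _ : T => c) F (locally c).
Proof. apply filterlim_const. Qed.

Lemma lim_opp (f : T -> R) a :
  filterlim f F (locally a) -> filterlim (fun x => - f x) F (locally (- a)).
Proof.
  intros Hf. eapply filterlim_comp; [exact Hf|].
  apply (filterlim_opp a).
Qed.

Lemma lim_inv (f : T -> R) a : a <> 0 ->
  filterlim f F (locally a) -> filterlim (fun x => / f x) F (locally (/ a)).
Proof.
  intros Ha Hf. eapply filterlim_comp; [exact Hf|].
  apply (filterlim_Rbar_inv (Finite a)). intro H; apply Ha. injection H; auto.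
Qed.

Lemma lim_div (f g : T -> R) a b : b <> 0 ->
  filterlim f F (locally a) -> filterlim g F (locally b) ->
  filterlim (fun x => f x / g x) F (locally (a / b)).
Proof.
  intros Hb Hf Hg. apply lim_mult; auto. apply lim_inv; auto.
Qed.

Lemma lim_ext (f g : T -> R) l :
  F (fun x => f x = g x) -> filterlim f F l -> filterlim g F l.
Proof. intros. eapply filterlim_ext_loc; eauto. Qed.

End Lims.

Lemma lim_eq {T} {F : (T -> Prop) -> Prop} (f : T -> R) a b :
  a = b -> filterlim f F (locally a) -> filterlim f F (locally b).
Proof. intros ->; auto. Qed.

Lemma cont_plus (f g : R -> R) x : continuous f x -> continuous g x ->
  continuous (fun y => f y + g y) x.
Proof. intros; apply (continuous_plus f g); auto. Qed.
Lemma cont_mult (f g : R -> R) x : continuous f x -> continuous g x ->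
  continuous (fun y => f y * g y) x.
Proof. intros; apply (continuous_mult f g); auto. Qed.
Lemma cont_opp (f : R -> R) x : continuous f x -> continuous (fun y => - f y) x.
Proof. intros; apply (continuous_opp f); auto. Qed.
Lemma cont_inv (f : R -> R) x : continuous f x -> f x <> 0 -> continuous (fun y => / f y) x.
Proof. intros; apply continuous_Rinv_comp; auto. Qed.
Lemma cont_const (c x : R) : continuous (fun _ : R => c) x.
Proof. apply continuous_const. Qed.
Lemma cont_id (x : R) : continuous (fun y : R => y) x.
Proof. apply continuous_id. Qed.

Lemma exd_cont (f : R -> R) x : ex_derive f x -> continuous f x.
Proof. intros H. apply (ex_derive_continuous (K:=R_AbsRing) (V:=R_NormedModule)); auto. Qed.

Lemma loc_gt (b y : R) : b < y -> locally y (fun z => b < z).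
Proof. intros H. apply (open_gt b). exact H. Qed.
Lemma loc_lt (b y : R) : y < b -> locally y (fun z => z < b).
Proof. intros H. apply (open_lt b). exact H. Qed.

Ltac eta_fix := repeat match goal with |- context [Derive (fun x0 : R => ?f x0)] => change (fun x0 : R => f x0) with f end.

Definition LD (f : R -> R) (y : R) : R := y * Derive f y / f y.

Definition RVn (b : R) (f : R -> R) (c : R) : Prop :=
  (forall y, b < y -> 0 < f y /\ ex_derive f y /\ continuous (Derive f) y) /\
  is_lim (LD f) p_infty c.

Lemma ev_gt (b : R) : Rbar_locally' p_infty (fun y => b < y).
Proof. exists b; auto. Qed.

Lemma RVn_mono b b' f c : RVn b f c -> b <= b' -> RVn b' f c.
Proof. intros [H1 H2] Hb; split; auto. intros y Hy; apply H1; lra. Qed.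

Lemma RVn_ceq b f c c' : RVn b f c -> c = c' -> RVn b f c'.
Proof. intros H ->; auto. Qed.

Lemma RVn_ext b f h c : RVn b f c -> (forall y, b < y -> f y = h y) -> RVn b h c.
Proof.
  intros [H1 H2] He. 
  assert (HD : forall y, b < y -> Derive f y = Derive h y).
  { intros y Hy. apply Derive_ext_loc. eapply filter_imp; [|apply (loc_gt b y Hy)].
    intros z Hz; auto. }
  split.
  - intros y Hy. destruct (H1 y Hy) as (Hp & Hd & Hc). repeat split.
    + rewrite <- He; auto.
    + eapply ex_derive_ext_loc; [|exact Hd]. eapply filter_imp; [|apply (loc_gt b y Hy)].
      intros z Hz; auto.
    + eapply continuous_ext_loc; [|exact Hc]. eapply filter_imp; [|apply (loc_gt b y Hy)].
      intros z Hz; apply HD; exact Hz.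
  - eapply is_lim_ext_loc; [|exact H2]. exists b. intros y Hy. unfold LD.
    rewrite HD, He; auto.
Qed.

Lemma RVn_mul b f g c1 c2 : RVn b f c1 -> RVn b g c2 ->
  RVn b (fun y => f y * g y) (c1 + c2).
Proof.
  intros [F1 F2] [G1 G2].
  assert (HD : forall y, b < y -> Derive (fun y => f y * g y) y =
                                Derive f y * g y + f y * Derive g y).
  { intros y Hy. apply Derive_mult; [apply F1|apply G1]; auto. }
  split.
  - intros y Hy. destruct (F1 y Hy) as (Fp & Fd & Fc). destruct (G1 y Hy) as (Gp & Gd & Gc).
    repeat split.
    + apply Rmult_lt_0_compat; auto.
    + apply ex_derive_mult; auto.
    + eapply continuous_ext_loc.
      { eapply filter_imp; [|apply (loc_gt b y Hy)]. intros z Hz. symmetry. apply HD; auto. }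
      apply cont_plus; apply cont_mult; auto; apply exd_cont; auto.
  - apply (is_lim_ext_loc (fun y => LD f y + LD g y)).
    { exists b. intros y Hy. unfold LD. rewrite (HD y Hy).
      destruct (F1 y Hy) as (Fp & _). destruct (G1 y Hy) as (Gp & _).
      field. lra. }
    apply (lim_plus (F:=Rbar_locally' p_infty)); auto.
Qed.

Lemma RVn_inv b f c : RVn b f c -> RVn b (fun y => / f y) (- c).
Proof.
  intros [F1 F2].
  assert (HD : forall y, b < y -> Derive (fun y => / f y) y = (- Derive f y) * / (f y * f y)).
  { intros y Hy. destruct (F1 y Hy) as (Fp&Fd&_). rewrite Derive_inv; auto; [|lra].
    simpl. field. lra. }
  split.
  - intros y Hy. destruct (F1 y Hy) as (Fp & Fd & Fc). repeat split.
    + apply Rinv_0_lt_compat; auto.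
    + apply ex_derive_inv; auto; lra.
    + eapply continuous_ext_loc.
      { eapply filter_imp; [|apply (loc_gt b y Hy)]. intros z Hz. symmetry. apply HD; auto. }
      apply cont_mult; [apply cont_opp; auto|]. apply cont_inv.
      * apply cont_mult; apply exd_cont; auto.
      * apply Rgt_not_eq. apply Rmult_lt_0_compat; auto.
  - apply (is_lim_ext_loc (fun y => - LD f y)).
    { exists b. intros y Hy. unfold LD. rewrite (HD y Hy).
      destruct (F1 y Hy) as (Fp & _). field. lra. }
    apply (lim_opp (F:=Rbar_locally' p_infty)); auto.
Qed.

Lemma RVn_sqrt b f c : RVn b f c -> RVn b (fun y => sqrt (f y)) (c / 2).
Proof.
  intros [F1 F2].
  assert (HD : forall y, b < y -> Derive (fun y => sqrt (f y)) y = Derive f y * / (2 * sqrt (f y))).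
  { intros y Hy. destruct (F1 y Hy) as (Fp&Fd&_). apply is_derive_unique.
    auto_derive; [repeat split; auto|]. rewrite Rmult_1_l; reflexivity. }
  split.
  - intros y Hy. destruct (F1 y Hy) as (Fp & Fd & Fc). repeat split.
    + apply sqrt_lt_R0; auto.
    + auto_derive. repeat split; auto.
    + eapply continuous_ext_loc.
      { eapply filter_imp; [|apply (loc_gt b y Hy)]. intros z Hz. symmetry. apply HD; auto. }
      apply cont_mult; auto. apply cont_inv.
      * apply cont_mult; [apply cont_const|]. apply continuous_sqrt_comp. apply exd_cont; auto.
      * apply Rgt_not_eq. apply Rmult_lt_0_compat; [lra|]. apply sqrt_lt_R0; auto.
  - apply (is_lim_ext_loc (fun y => LD f y * / 2)).
    { exists b. intros y Hy. unfold LD. rewrite (HD y Hy).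
      destruct (F1 y Hy) as (Fp & _). 
      assert (Hs : 0 < sqrt (f y)) by (apply sqrt_lt_R0; auto).
      assert (E : sqrt (f y) * sqrt (f y) = f y) by (apply sqrt_sqrt; lra).
      set (s := sqrt (f y)) in *. rewrite <- E. field. lra. }
    apply (lim_mult (F:=Rbar_locally' p_infty)); auto. apply lim_const.
Qed.

Lemma RVn_Rpower c : RVn 0 (fun y => Rpower y c) c.
Proof.
  assert (HD : forall y, 0 < y -> Derive (fun y => Rpower y c) y = c * exp (c * ln y) * / y).
  { intros y Hy. apply is_derive_unique. unfold Rpower. auto_derive; auto. field. lra. }
  split.
  - intros y Hy. repeat split.
    + apply exp_pos.
    + unfold Rpower. auto_derive. auto.
    + eapply continuous_ext_loc.
      { eapply filter_imp; [|apply (loc_gt 0 y Hy)]. intros z Hz. symmetry. apply HD; auto. }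
      apply exd_cont. auto_derive. repeat split; auto; lra.
  - apply (is_lim_ext_loc (fun y => c)).
    { exists 0. intros y Hy. unfold LD. rewrite (HD y Hy). unfold Rpower.
      assert (0 < exp (c * ln y)) by apply exp_pos. field. lra. }
    apply (lim_const (F:=Rbar_locally' p_infty)).
Qed.

Lemma NSV_RVn B L : NSV_on B L -> RVn B L 0.
Proof.
  intros (H1 & H2 & H3). split; [|exact H3].
  intros y Hy. destruct (H2 y Hy). split; auto.
Qed.

Lemma RVn_Rpower_mul b h c c' : RVn b h c' -> RVn (Rmax b 0) (fun y => Rpower y c * h y) (c + c').
Proof.
  intros H. apply RVn_mul.
  - eapply RVn_mono; [apply RVn_Rpower|apply Rmax_r].
  - eapply RVn_mono; [exact H|apply Rmax_l].
Qed.

Lemma Rpower_pos x a : 0 < Rpower x a.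
Proof. apply exp_pos. Qed.

Lemma isd_cont (f : R -> R) x l : is_derive f x l -> continuity_pt f x.
Proof. intros H. apply continuity_pt_filterlim. apply exd_cont. exists l; auto. Qed.

Lemma decr_lemma (f df : R -> R) a b : a <= b ->
  (forall x, a <= x <= b -> is_derive f x (df x)) ->
  (forall x, a <= x <= b -> df x <= 0) -> f b <= f a.
Proof.
  intros Hab Hd Hs. destruct (Req_dec a b) as [<-|Hne]; [lra|].
  destruct (MVT_gen f a b df) as (c & Hc & He).
  - intros x Hx. apply Hd. rewrite Rmin_left, Rmax_right in Hx; lra.
  - intros x Hx. rewrite Rmin_left, Rmax_right in Hx by lra. eapply isd_cont. apply Hd; lra.
  - rewrite Rmin_left, Rmax_right in Hc by lra.
    assert (df c <= 0) by (apply Hs; lra). nra.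
Qed.

Lemma sdecr_lemma (f df : R -> R) a b : a < b ->
  (forall x, a <= x <= b -> is_derive f x (df x)) ->
  (forall x, a <= x <= b -> df x < 0) -> f b < f a.
Proof.
  intros Hab Hd Hs.
  destruct (MVT_gen f a b df) as (c & Hc & He).
  - intros x Hx. apply Hd. rewrite Rmin_left, Rmax_right in Hx; lra.
  - intros x Hx. rewrite Rmin_left, Rmax_right in Hx by lra. eapply isd_cont. apply Hd; lra.
  - rewrite Rmin_left, Rmax_right in Hc by lra.
    assert (df c < 0) by (apply Hs; lra). nra.
Qed.

Lemma mono_pow_up (f : R -> R) u0 d : 0 < u0 ->
  (forall y, u0 <= y -> 0 < f y /\ ex_derive f y) ->
  (forall y, u0 <= y -> LD f y <= d) ->
  forall y, u0 <= y -> f y * Rpower y (-d) <= f u0 * Rpower u0 (-d).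
Proof.
  intros Hu Hf HL y Hy.
  apply (decr_lemma (fun z => f z * Rpower z (-d))
     (fun z => f z * Rpower z (-d) * (LD f z - d) / z)); auto.
  - intros x Hx. destruct (Hf x (proj1 Hx)) as (Hp & Hd).
    unfold Rpower. auto_derive. { repeat split; auto; lra. }
    eta_fix. unfold LD. field. lra.
  - intros x Hx. destruct (Hf x (proj1 Hx)) as (Hp & Hd).
    assert (LD f x - d <= 0) by (generalize (HL x (proj1 Hx)); lra).
    assert (0 < f x * Rpower x (-d)) by (apply Rmult_lt_0_compat; auto; apply Rpower_pos).
    unfold Rdiv. apply Rmult_le_0_r; [|left; apply Rinv_0_lt_compat; lra].
    apply Rmult_le_0_l; lra.
Qed.

Lemma mono_pow_down (f : R -> R) u0 d : 0 < u0 ->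
  (forall y, u0 <= y -> 0 < f y /\ ex_derive f y) ->
  (forall y, u0 <= y -> d <= LD f y) ->
  forall y, u0 <= y -> f u0 * Rpower u0 (-d) <= f y * Rpower y (-d).
Proof.
  intros Hu Hf HL y Hy.
  assert (H := decr_lemma (fun z => - (f z * Rpower z (-d)))
     (fun z => - (f z * Rpower z (-d) * (LD f z - d) / z)) u0 y Hy).
  cut (- (f y * Rpower y (- d)) <= - (f u0 * Rpower u0 (- d))); [lra|].
  apply H.
  - intros x Hx. destruct (Hf x (proj1 Hx)) as (Hp & Hd).
    unfold Rpower. auto_derive. { repeat split; auto; lra. }
    eta_fix. unfold LD. field. lra.
  - intros x Hx. destruct (Hf x (proj1 Hx)) as (Hp & Hd).
    assert (0 <= LD f x - d) by (generalize (HL x (proj1 Hx)); lra).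
    assert (0 < f x * Rpower x (-d)) by (apply Rmult_lt_0_compat; auto; apply Rpower_pos).
    assert (0 <= f x * Rpower x (-d) * (LD f x - d) / x); [|lra].
    unfold Rdiv. apply Rmult_le_pos; [|left; apply Rinv_0_lt_compat; lra].
    apply Rmult_le_pos; lra.
Qed.

Lemma Rpower_inf p : 0 < p -> is_lim (fun y => Rpower y p) p_infty p_infty.
Proof.
  intros Hp. unfold Rpower.
  apply (is_lim_comp exp (fun y => p * ln y) p_infty p_infty p_infty).
  - apply is_lim_exp_p.
  - assert (H := is_lim_scal_l ln p p_infty p_infty is_lim_ln_p).
    simpl in H. destruct (Rle_dec 0 p) as [H0|H0]; [|lra].
    destruct (Rle_lt_or_eq_dec 0 p H0) as [H1|H1]; [exact H|lra].
  - exists 0; intros; discriminate.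
Qed.

Lemma Rpower_zero p : 0 < p -> is_lim (fun y => Rpower y (-p)) p_infty 0.
Proof.
  intros Hp. apply (is_lim_ext (fun y => / Rpower y p)).
  { intros y. rewrite Rpower_Ropp; auto. }
  apply (is_lim_inv _ _ p_infty); [apply Rpower_inf; auto|discriminate].
Qed.

Lemma ev_inf_gt (f : R -> R) C : is_lim f p_infty p_infty ->
  Rbar_locally' p_infty (fun y => C < f y).
Proof.
  intros H. apply (H (fun z => C < z)). exists C; auto.
Qed.

Lemma lim_ball (f : R -> R) (l : R) eps : is_lim f p_infty l -> 0 < eps ->
  exists M, forall y, M < y -> Rabs (f y - l) < eps.
Proof.
  intros H He. destruct (H (fun z => Rabs (z - l) < eps)) as [M HM].
  { exists (mkposreal eps He). intros z Hz. exact Hz. }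
  exists M; auto.
Qed.

Lemma RVn_bounds b f c eps : RVn b f c -> 0 < eps ->
  exists M, forall y, M < y -> Rpower y (c - eps) <= f y <= Rpower y (c + eps).
Proof.
  intros [F1 F2] He.
  destruct (lim_ball _ _ (eps/2) F2) as [M0 HM0]; [lra|].
  set (u0 := Rmax (M0 + 1) (Rmax (b + 1) 1)).
  assert (Hu1 : M0 < u0) by (unfold u0; generalize (Rmax_l (M0+1) (Rmax (b+1) 1)); lra).
  assert (Hu2 : b < u0) by (unfold u0; generalize (Rmax_r (M0+1) (Rmax (b+1) 1)) (Rmax_l (b+1) 1); lra).
  assert (Hu3 : 0 < u0) by (unfold u0; generalize (Rmax_r (M0+1) (Rmax (b+1) 1)) (Rmax_r (b+1) 1); lra).
  assert (Hf : forall y, u0 <= y -> 0 < f y /\ ex_derive f y).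
  { intros y Hy. destruct (F1 y) as (A1&A2&_); [lra|]; auto. }
  assert (HLu : forall y, u0 <= y -> LD f y <= c + eps/2).
  { intros y Hy. generalize (HM0 y ltac:(lra)). intros H; apply Rabs_def2 in H; lra. }
  assert (HLd : forall y, u0 <= y -> c - eps/2 <= LD f y).
  { intros y Hy. generalize (HM0 y ltac:(lra)). intros H; apply Rabs_def2 in H; lra. }
  set (C1 := f u0 * Rpower u0 (-(c + eps/2))).
  set (C2 := f u0 * Rpower u0 (-(c - eps/2))).
  assert (HC2 : 0 < C2) by (apply Rmult_lt_0_compat; [apply Hf; lra|apply Rpower_pos]).
  destruct (ev_inf_gt _ C1 (Rpower_inf (eps/2) ltac:(lra))) as [M1 HM1].
  destruct (ev_inf_gt _ (/ C2) (Rpower_inf (eps/2) ltac:(lra))) as [M2 HM2].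
  exists (Rmax u0 (Rmax M1 M2)). intros y Hy.
  assert (Hy0 : u0 < y) by (generalize (Rmax_l u0 (Rmax M1 M2)); lra).
  assert (Hy1 : M1 < y) by (generalize (Rmax_r u0 (Rmax M1 M2)) (Rmax_l M1 M2); lra).
  assert (Hy2 : M2 < y) by (generalize (Rmax_r u0 (Rmax M1 M2)) (Rmax_r M1 M2); lra).
  assert (Hfy : 0 < f y) by (apply Hf; lra).
  assert (Up := mono_pow_up f u0 (c + eps/2) Hu3 Hf HLu y ltac:(lra)).
  assert (Dn := mono_pow_down f u0 (c - eps/2) Hu3 Hf HLd y ltac:(lra)).
  fold C1 in Up. fold C2 in Dn.
  assert (HA := HM1 y Hy1). assert (HB := HM2 y Hy2).
  assert (E1 : Rpower y (c + eps) = Rpower y (c + eps/2) * Rpower y (eps/2)).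
  { rewrite <- Rpower_plus. f_equal; lra. }
  assert (E2 : Rpower y (c - eps/2) = Rpower y (c - eps) * Rpower y (eps/2)).
  { rewrite <- Rpower_plus. f_equal; lra. }
  assert (E3 : f y = f y * Rpower y (- (c + eps/2)) * Rpower y (c + eps/2)).
  { rewrite Rmult_assoc, <- Rpower_plus. replace (- (c + eps/2) + (c + eps/2)) with 0 by ring.
    rewrite Rpower_O by lra. ring. }
  assert (E4 : f y = f y * Rpower y (- (c - eps/2)) * Rpower y (c - eps/2)).
  { rewrite Rmult_assoc, <- Rpower_plus. replace (- (c - eps/2) + (c - eps/2)) with 0 by ring.
    rewrite Rpower_O by lra. ring. }
  assert (P1 := Rpower_pos y (c + eps/2)). assert (P2 := Rpower_pos y (c - eps)).
  assert (P3 := Rpower_pos y (eps/2)). 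
  split.
  - rewrite E4, E2.
    assert (Rpower y (c - eps) <= C2 * Rpower y (c - eps) * Rpower y (eps / 2)).
    { assert (1 <= C2 * Rpower y (eps/2)).
      { apply Rlt_le. apply (Rmult_lt_reg_l (/ C2)). apply Rinv_0_lt_compat; auto.
        rewrite <- Rmult_assoc, Rinv_l, Rmult_1_l, Rmult_1_r; lra. }
      nra. }
    assert (C2 * Rpower y (c - eps) * Rpower y (eps / 2) <=
      f y * Rpower y (- (c - eps / 2)) * (Rpower y (c - eps) * Rpower y (eps / 2))).
    { rewrite <- Rmult_assoc. apply Rmult_le_compat_r; [lra|]. apply Rmult_le_compat_r; lra. }
    lra.
  - assert (Up' : f y * Rpower y (-(c+eps/2)) * Rpower y (c+eps/2) <= C1 * Rpower y (c+eps/2))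
      by (apply Rmult_le_compat_r; lra).
    rewrite E3, E1.
    assert (C1 * Rpower y (c + eps / 2) <= Rpower y (c + eps / 2) * Rpower y (eps / 2)) by nra.
    lra.
Qed.

Lemma isd_minus (f g : R -> R) x df dg : is_derive f x df -> is_derive g x dg ->
  is_derive (fun t => f t - g t) x (df - dg).
Proof. intros; apply (is_derive_minus (K:=R_AbsRing) (V:=R_NormedModule)); auto. Qed.
Lemma isd_plus (f g : R -> R) x df dg : is_derive f x df -> is_derive g x dg ->
  is_derive (fun t => f t + g t) x (df + dg).
Proof. intros; apply (is_derive_plus (K:=R_AbsRing) (V:=R_NormedModule)); auto. Qed.

Lemma lim_of_eps (h : R -> R) (l : R) :
  (forall eps, 0 < eps -> exists M, forall x, M < x -> Rabs (h x - l) <= eps) ->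
  is_lim h p_infty l.
Proof.
  intros H P [e He]. destruct (H (e/2)) as [M HM]. { destruct e; simpl; lra. }
  exists M. intros x Hx. apply He. generalize (HM x Hx). destruct e; simpl. 
  intros; change (Rabs (h x - l) < pos). lra.
Qed.

Lemma lim_le_const (h : R -> R) (l c : R) :
  Rbar_locally' p_infty (fun y => h y <= c) -> is_lim h p_infty l -> l <= c.
Proof.
  intros H1 H2. assert (Hc : is_lim (fun _ => c) p_infty c) by apply is_lim_const.
  exact (is_lim_le_loc _ _ p_infty l c H1 H2 Hc).
Qed.

Lemma lim_ge_const (h : R -> R) (l c : R) :
  Rbar_locally' p_infty (fun y => c <= h y) -> is_lim h p_infty l -> c <= l.
Proof.
  intros H1 H2. assert (Hc : is_lim (fun _ => c) p_infty c) by apply is_lim_const.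
  exact (is_lim_le_loc _ _ p_infty c l H1 Hc H2).
Qed.

Lemma LHop (f1 f2 d1 d2 : R -> R) M (l : R) :
  (forall y, M < y -> is_derive f1 y (d1 y) /\ is_derive f2 y (d2 y) /\ d2 y < 0) ->
  is_lim f1 p_infty 0 -> is_lim f2 p_infty 0 ->
  is_lim (fun y => d1 y / d2 y) p_infty l ->
  is_lim (fun y => f1 y / f2 y) p_infty l.
Proof.
  intros Hd H1 H2 H3.
  assert (Hdec : forall x w, M < x -> x < w -> f2 w < f2 x).
  { intros x w Hx Hw. apply (sdecr_lemma f2 d2); auto.
    - intros z Hz; apply Hd; lra.
    - intros z Hz; apply Hd; lra. }
  assert (Hpos : forall x, M < x -> 0 < f2 x).
  { intros x Hx. assert (f2 (x+1) < f2 x) by (apply Hdec; lra).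
    assert (0 <= f2 (x+1)); [|lra].
    apply (lim_le_const f2 0 (f2 (x+1))); [|exact H2].
    exists (x+1); intros w Hw; left; apply Hdec; lra. }
  apply lim_of_eps. intros eps He.
  destruct (lim_ball _ _ eps H3 He) as [M1 HM1].
  exists (Rmax M M1). intros x Hx.
  assert (HxM : M < x) by (generalize (Rmax_l M M1); lra).
  assert (HxM1 : M1 < x) by (generalize (Rmax_r M M1); lra).
  assert (Hr : forall y, x < y -> Rabs ((f1 y - f1 x) / (f2 y - f2 x) - l) < eps).
  { intros y Hy.
    destruct (MVT_gen (fun z => (f2 y - f2 x) * f1 z - (f1 y - f1 x) * f2 z) x y
      (fun z => (f2 y - f2 x) * d1 z - (f1 y - f1 x) * d2 z)) as (c & Hc & Heq).
    - intros z Hz. rewrite Rmin_left, Rmax_right in Hz by lra.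
      destruct (Hd z ltac:(lra)) as (A1 & A2 & _).
      apply isd_minus; apply is_derive_scal; auto.
    - intros z Hz. rewrite Rmin_left, Rmax_right in Hz by lra.
      destruct (Hd z ltac:(lra)) as (A1 & A2 & _).
      apply continuity_pt_minus; apply continuity_pt_scal; eapply isd_cont; eauto.
    - rewrite Rmin_left, Rmax_right in Hc by lra.
      destruct (Hd c ltac:(lra)) as (_ & _ & Hd2).
      assert (Hf2 : f2 y - f2 x < 0) by (generalize (Hdec x y HxM Hy); lra).
      assert (E : (f1 y - f1 x) / (f2 y - f2 x) = d1 c / d2 c).
      { assert (Hz : d1 c * (f2 y - f2 x) - d2 c * (f1 y - f1 x) = 0).
        { assert (Hyx : y - x <> 0) by lra.
          apply (Rmult_eq_reg_r (y - x)); auto. rewrite Rmult_0_l.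
          replace ((d1 c * (f2 y - f2 x) - d2 c * (f1 y - f1 x)) * (y - x)) with
            (((f2 y - f2 x) * d1 c - (f1 y - f1 x) * d2 c) * (y - x)) by ring.
          rewrite <- Heq. ring. }
        field_simplify_eq; [lra|lra]. }
      rewrite E. apply HM1. lra. }
  assert (Hlim : is_lim (fun y => (f1 y - f1 x) / (f2 y - f2 x)) p_infty (f1 x / f2 x)).
  { assert (Hp := Hpos x HxM).
    replace (f1 x / f2 x) with ((0 - f1 x) / (0 - f2 x)) by (field; lra).
    apply (lim_div (F:=Rbar_locally' p_infty)); [lra| |].
    - apply (lim_plus (F:=Rbar_locally' p_infty)); [exact H1|]. apply lim_const.
    - apply (lim_plus (F:=Rbar_locally' p_infty)); [exact H2|]. apply lim_const. }
  apply Rabs_le. split.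
  - cut (l - eps <= f1 x / f2 x); [lra|].
    eapply lim_ge_const; [|exact Hlim].
    exists x; intros y Hy; generalize (Hr y Hy); intros Q; apply Rabs_def2 in Q; lra.
  - cut (f1 x / f2 x <= l + eps); [lra|].
    eapply lim_le_const; [|exact Hlim].
    exists x; intros y Hy; generalize (Hr y Hy); intros Q; apply Rabs_def2 in Q; lra.
Qed.

Lemma exRInt_on b (f : R -> R) u v : (forall x, b < x -> continuous f x) -> b < u -> b < v ->
  ex_RInt f u v.
Proof.
  intros H Hu Hv. apply (ex_RInt_continuous (V:=R_CompleteNormedModule)). intros z Hz. apply H.
  destruct (Rle_dec u v); [rewrite Rmin_left in Hz|rewrite Rmin_right in Hz]; lra.
Qed.

Lemma deriv_RInt b (f : R -> R) a z : (forall x, b < x -> continuous f x) -> b < a -> b < z ->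
  is_derive (fun t => RInt f a t) z (f z).
Proof.
  intros H Ha Hz. apply (is_derive_RInt (V:=R_NormedModule) f (RInt f a) a z).
  - eapply filter_imp; [|apply (loc_gt b z Hz)]. intros w Hw. apply (RInt_correct (V:=R_CompleteNormedModule)).
    eapply exRInt_on; eauto.
  - apply H; auto.
Qed.

Lemma TI b f alpha : RVn b f (- alpha) -> 1 < alpha -> 0 <= b ->
  exists G : R -> R,
    (forall y, b < y -> is_derive G y (- f y) /\ 0 < G y /\
        is_RInt_gen f (at_point y) (Rbar_locally p_infty) (G y)) /\
    is_lim G p_infty 0 /\
    is_lim (fun y => G y / (y * f y)) p_infty (/ (alpha - 1)).
Proof.
  intros Hf Ha Hb. destruct Hf as [F1 F2] eqn:EHf.
  assert (Fc : forall x, b < x -> continuous f x).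
  { intros x Hx. apply exd_cont. apply F1; auto. }
  set (k := 2 / (alpha - 1)).
  assert (Hk : 0 < k) by (unfold k; apply Rdiv_lt_0_compat; lra).
  destruct (lim_ball (LD f) (- alpha) ((alpha - 1)/2) F2 ltac:(lra)) as [M0 HM0].
  set (M := Rmax M0 (b + 1)).
  assert (HM1 : M0 <= M) by (unfold M; apply Rmax_l).
  assert (HM2 : b + 1 <= M) by (unfold M; apply Rmax_r).
  assert (HLD : forall y, M < y -> 1 + LD f y < - ((alpha - 1)/2)).
  { intros y Hy. generalize (HM0 y ltac:(lra)). intros Q; apply Rabs_def2 in Q; lra. }
  assert (Hyf : forall y, b < y -> is_derive (fun y => y * f y) y (f y * (1 + LD f y))).
  { intros y Hy. destruct (F1 y Hy) as (Fp & Fd & _). auto_derive; auto.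
    eta_fix. unfold LD. field. lra. }
  assert (Hyf0 : is_lim (fun y => y * f y) p_infty 0).
  { destruct (RVn_bounds b f (- alpha) ((alpha - 1)/2) Hf ltac:(lra)) as [M2 HM2'].
    apply (is_lim_le_le_loc (fun _ => 0) (fun y => Rpower y (- ((alpha - 1)/2)))).
    - exists (Rmax M2 (b + 1)). intros y Hy.
      assert (Hy1 : M2 < y) by (generalize (Rmax_l M2 (b+1)); lra).
      assert (Hy2 : b + 1 < y) by (generalize (Rmax_r M2 (b+1)); lra).
      destruct (F1 y ltac:(lra)) as (Fp & _).
      split; [apply Rmult_le_pos; lra|].
      destruct (HM2' y Hy1) as [_ Hu].
      replace (Rpower y (- ((alpha - 1) / 2))) with (y * Rpower y (- alpha + (alpha - 1) / 2)).
      + apply Rmult_le_compat_l; lra.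
      + pattern y at 1; rewrite <- (Rpower_1 y) by lra. rewrite <- Rpower_plus. f_equal. field.
    - apply is_lim_const.
    - apply Rpower_zero. lra. }
  assert (Htail : forall u v, M < u -> u <= v -> RInt f u v <= k * (u * f u)).
  { intros u v Hu Huv.
    assert (H := decr_lemma (fun z => RInt f u z + k * (z * f z))
       (fun z => f z + k * (f z * (1 + LD f z))) u v Huv).
    simpl in H. rewrite RInt_point in H.
    assert (Hv : 0 <= k * (v * f v)).
    { destruct (F1 v ltac:(lra)) as (Fp & _). apply Rmult_le_pos; [lra|]. apply Rmult_le_pos; lra. }
    cut (RInt f u v + k * (v * f v) <= zero + k * (u * f u)). { change (zero : R) with 0. lra. }
    apply H.
    - intros x Hx. apply isd_plus.
      + apply (deriv_RInt b); auto; lra.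
      + apply is_derive_scal. apply Hyf. lra.
    - intros x Hx. destruct (F1 x ltac:(lra)) as (Fp & _).
      assert (k * (1 + LD f x) < -1).
      { assert (H1 := HLD x ltac:(lra)).
        apply Rlt_le_trans with (k * (- ((alpha - 1) / 2))).
        - apply Rmult_lt_compat_l; auto.
        - unfold k. right. field. lra. }
      replace (f x + k * (f x * (1 + LD f x))) with (f x * (1 + k * (1 + LD f x))) by ring.
      assert (0 < f x * - (1 + k * (1 + LD f x))) by (apply Rmult_lt_0_compat; lra). lra. }
  assert (Htail0 : forall u v, b < u -> u <= v -> 0 <= RInt f u v).
  { intros u v Hu Huv. apply RInt_ge_0; auto.
    - eapply exRInt_on; eauto; lra.
    - intros x Hx. left. apply F1. lra. }
  set (y1 := b + 1).
  assert (Hc : exists c0 : R, filterlim (fun v => RInt f y1 v) (Rbar_locally p_infty) (locally c0)).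
  { apply (proj1 (filterlim_locally_cauchy (U:=R_CompleteSpace) (F := Rbar_locally p_infty) (fun v => RInt f y1 v))).
    intros eps.
    destruct (lim_ball _ 0 (eps / k) Hyf0) as [M3 HM3].
    { apply Rdiv_lt_0_compat; auto. destruct eps; simpl; lra. }
    exists (fun v => Rmax M M3 < v). split.
    - exists (Rmax M M3); auto.
    - intros u v Hu Hv.
      assert (Hu1 : M < u) by (generalize (Rmax_l M M3); lra).
      assert (Hu3 : M3 < u) by (generalize (Rmax_r M M3); lra).
      assert (Hv1 : M < v) by (generalize (Rmax_l M M3); lra).
      assert (Hv3 : M3 < v) by (generalize (Rmax_r M M3); lra).
      change (Rabs (RInt f y1 v - RInt f y1 u) < eps).
      assert (Ech : forall p q, b < p -> b < q -> RInt f y1 q - RInt f y1 p = RInt f p q).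
      { intros p q Hp Hq. rewrite <- (RInt_Chasles f y1 p q).
        - change (plus ?a ?b') with (a + b'). ring.
        - eapply exRInt_on; eauto; unfold y1; lra.
        - eapply exRInt_on; eauto. }
      assert (Hke : forall w, M3 < w -> k * (w * f w) < eps).
      { intros w Hw. generalize (HM3 w Hw). rewrite Rminus_0_r. intros Q.
        apply Rabs_def2 in Q. destruct Q as [Q _].
        apply Rlt_le_trans with (k * (eps / k)); [apply Rmult_lt_compat_l; auto|].
        right; field; lra. }
      destruct (Rle_dec u v) as [Huv|Hvu].
      + rewrite Ech by lra. rewrite Rabs_right.
        * generalize (Htail u v Hu1 Huv) (Hke u Hu3); lra.
        * apply Rle_ge, Htail0; lra.
      + rewrite <- Rabs_Ropp. replace (- (RInt f y1 v - RInt f y1 u)) with (RInt f y1 u - RInt f y1 v) by ring.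
        rewrite Ech by lra. rewrite Rabs_right.
        * generalize (Htail v u Hv1 ltac:(lra)) (Hke v Hv3); lra.
        * apply Rle_ge, Htail0; lra. }
  destruct Hc as [c0 Hc0].
  set (G := fun y => c0 - RInt f y1 y).
  assert (Hder : forall y, b < y -> is_derive G y (- f y)).
  { intros y Hy. unfold G. replace (- f y) with (0 - f y) by ring. apply isd_minus.
    - apply (is_derive_const (K:=R_AbsRing) (V:=R_NormedModule)).
    - apply (deriv_RInt b); auto. unfold y1; lra. }
  assert (HG0 : is_lim G p_infty 0).
  { unfold G. replace (Finite 0) with (Finite (c0 + - c0)) by (f_equal; ring).
    apply (lim_plus (F:=Rbar_locally' p_infty)); [apply lim_const|].
    apply (lim_opp (F:=Rbar_locally' p_infty)). exact Hc0. }
  assert (Hmon : forall y w, b < y -> y <= w -> G w <= G y).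
  { intros y w Hy Hw. apply (decr_lemma G (fun z => - f z)); auto.
    - intros x Hx; apply Hder; lra.
    - intros x Hx. destruct (F1 x ltac:(lra)). lra. }
  assert (Hpos : forall y, b < y -> 0 < G y).
  { intros y Hy. assert (G (y + 1) < G y).
    { apply (sdecr_lemma G (fun z => - f z)); [lra| |].
      - intros x Hx; apply Hder; lra.
      - intros x Hx. destruct (F1 x ltac:(lra)). lra. }
    assert (0 <= G (y + 1)); [|lra].
    apply (lim_le_const G 0 (G (y+1))); auto.
    exists (y + 1). intros w Hw. apply Hmon; lra. }
  exists G. split; [|split].
  - intros y Hy. split; [apply Hder; auto|split; [apply Hpos; auto|]].
    assert (HI : is_RInt_gen (Derive (fun t => RInt f y1 t)) (at_point y) (Rbar_locally p_infty)
                   (c0 - RInt f y1 y)).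
    { apply is_RInt_gen_Derive.
      - apply (Filter_prod _ _ _ (fun a => a = y) (fun z => y < z)).
        + reflexivity.
        + exists y; auto.
        + intros a z Ea Hz. subst a. simpl. intros x Hx.
          rewrite Rmin_left, Rmax_right in Hx by lra.
          eexists. apply (deriv_RInt b); auto; unfold y1; lra.
      - apply (Filter_prod _ _ _ (fun a => a = y) (fun z => y < z)).
        + reflexivity.
        + exists y; auto.
        + intros a z Ea Hz. subst a. simpl. intros x Hx.
          rewrite Rmin_left, Rmax_right in Hx by lra.
          apply continuous_ext_loc with f.
          * eapply filter_imp; [|apply (loc_gt b x ltac:(lra))]. intros w Hw.
            symmetry. apply is_derive_unique. apply (deriv_RInt b); auto; unfold y1; lra.
          * apply Fc. lra.
      - intros P HP. exact (locally_singleton _ _ HP).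
      - exact Hc0. }
    eapply is_RInt_gen_ext; [|exact HI].
    apply (Filter_prod _ _ _ (fun a => a = y) (fun z => y < z)).
    + reflexivity.
    + exists y; auto.
    + intros a z Ea Hz. subst a. simpl. intros x Hx.
      rewrite Rmin_left, Rmax_right in Hx by lra.
      apply is_derive_unique. apply (deriv_RInt b); auto; unfold y1; lra.
  - exact HG0.
  - apply (LHop G (fun y => y * f y) (fun y => - f y) (fun y => f y * (1 + LD f y)) M).
    + intros y Hy. split; [apply Hder; lra|split; [apply Hyf; lra|]].
      destruct (F1 y ltac:(lra)) as (Fp & _). generalize (HLD y Hy); intros.
      assert (0 < f y * - (1 + LD f y)) by (apply Rmult_lt_0_compat; lra). lra.
    + exact HG0.
    + exact Hyf0.
    + apply (is_lim_ext_loc (fun y => - / (1 + LD f y))).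
      { exists M. intros y Hy. destruct (F1 y ltac:(lra)) as (Fp & _).
        generalize (HLD y Hy); intros. field. split; lra. }
      replace (/ (alpha - 1)) with (- / (1 + - alpha)) by (field; lra).
      apply (lim_opp (F:=Rbar_locally' p_infty)).
      apply (lim_inv (F:=Rbar_locally' p_infty)); [lra|].
      apply (lim_plus (F:=Rbar_locally' p_infty)); [apply lim_const|exact F2].
Qed.

Lemma deriv_quot_lim (f : R -> R) x l : is_derive f x l ->
  filterlim (fun h => (f (x + h) - f x) / h) (locally' 0) (locally l).
Proof.
  intros H. apply is_derive_Reals in H. intros P [eps HP].
  destruct (H eps (cond_pos eps)) as [d Hd]. exists d. intros h Hh Hne.
  apply HP. apply Hd; auto. change (Rabs (h - 0) < d) in Hh. rewrite Rminus_0_r in Hh; auto.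
Qed.

Lemma lim_to_deriv (f : R -> R) x l :
  filterlim (fun h => (f (x + h) - f x) / h) (locally' 0) (locally l) -> is_derive f x l.
Proof.
  intros H. apply is_derive_Reals. intros eps Heps.
  destruct (H (fun z => Rabs (z - l) < eps)) as [d Hd].
  { exists (mkposreal eps Heps); intros; auto. }
  exists d. intros h Hh0 Hh. apply Hd; auto. change (Rabs (h - 0) < d). rewrite Rminus_0_r; auto.
Qed.

Lemma locally'_not (x : R) : locally' x (fun h => h <> x).
Proof. exists (mkposreal 1 Rlt_0_1); intros; auto. Qed.

Lemma inverse_deriv (G g H K Phi : R -> R) y0 beta :
  (forall y, y0 < y -> is_derive G y (- g y) /\ 0 < g y) ->
  (forall t, 0 < t < beta -> is_derive H t (K t) /\ 0 < K t) ->
  (forall t, 0 < t < beta -> y0 < Phi t /\ G (Phi t) = H t) ->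
  forall t, 0 < t < beta -> is_derive Phi t (- K t / g (Phi t)) /\
     filterlim Phi (locally t) (locally (Phi t)).
Proof.
  intros HG HH HP t0 Ht0.
  assert (Gsd : forall p q, y0 < p -> p < q -> G q < G p).
  { intros p q Hp Hq. apply (sdecr_lemma G (fun z => - g z)); auto.
    - intros x Hx; apply HG; lra.
    - intros x Hx. destruct (HG x ltac:(lra)). lra. }
  assert (Hsi : forall p q, 0 < p -> p < q -> q < beta -> H p < H q).
  { intros p q Hp Hq Hb.
    assert (- H q < - H p); [|lra].
    apply (sdecr_lemma (fun z => - H z) (fun z => - K z)); auto.
    - intros x Hx. apply (is_derive_opp (K:=R_AbsRing) (V:=R_NormedModule) H). apply HH; lra.
    - intros x Hx. destruct (HH x ltac:(lra)). lra. }
  destruct (HP t0 Ht0) as [Hy0 HGy].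
  set (y := Phi t0) in *.
  assert (Hcont : filterlim Phi (locally t0) (locally y)).
  { intros P [eps HPe].
    set (e := Rmin eps ((y - y0)/2)).
    assert (He : 0 < e) by (unfold e; apply Rmin_pos; [apply cond_pos|lra]).
    assert (He1 : e <= eps) by (unfold e; apply Rmin_l).
    assert (He2 : e <= (y - y0)/2) by (unfold e; apply Rmin_r).
    assert (A1 : G (y + e) < H t0) by (rewrite <- HGy; apply Gsd; lra).
    assert (A2 : H t0 < G (y - e)) by (rewrite <- HGy; apply Gsd; lra).
    assert (HcH : continuity_pt H t0) by (eapply isd_cont; apply HH; auto).
    apply continuity_pt_filterlim in HcH.
    set (m := Rmin (H t0 - G (y + e)) (G (y - e) - H t0)).
    assert (Hm : 0 < m) by (unfold m; apply Rmin_pos; lra).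
    destruct (HcH (fun z => Rabs (z - H t0) < m)) as [d1 Hd1].
    { exists (mkposreal m Hm). intros z Hz; exact Hz. }
    set (d := Rmin d1 (Rmin (t0/2) ((beta - t0)/2))).
    assert (Hd : 0 < d).
    { unfold d. apply Rmin_pos; [apply cond_pos|apply Rmin_pos; lra]. }
    exists (mkposreal d Hd). intros t Ht. simpl in Ht. change (Rabs (t - t0) < d) in Ht.
    assert (Ht1 : Rabs (t - t0) < d1) by (generalize (Rmin_l d1 (Rmin (t0/2) ((beta - t0)/2))); fold d; lra).
    assert (Ht2 : Rabs (t - t0) < t0/2).
    { generalize (Rmin_r d1 (Rmin (t0/2) ((beta - t0)/2))) (Rmin_l (t0/2) ((beta - t0)/2)); fold d; lra. }
    assert (Ht3 : Rabs (t - t0) < (beta - t0)/2).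
    { generalize (Rmin_r d1 (Rmin (t0/2) ((beta - t0)/2))) (Rmin_r (t0/2) ((beta - t0)/2)); fold d; lra. }
    apply Rabs_def2 in Ht2. apply Rabs_def2 in Ht3.
    assert (Hm1 := Hd1 t Ht1). apply Rabs_def2 in Hm1.
    assert (m <= H t0 - G (y + e)) by apply Rmin_l.
    assert (m <= G (y - e) - H t0) by apply Rmin_r.
    destruct (HP t ltac:(lra)) as [Hpt HGt].
    apply HPe. change (Rabs (Phi t - y) < eps).
    apply Rabs_def1.
    + destruct (Rlt_dec (Phi t - y) e) as [Q|Q]; [lra|].
      exfalso. assert (G (Phi t) <= G (y + e)).
      { destruct (Req_dec (Phi t) (y + e)) as [E|E]; [rewrite E; lra|].
        left. apply Gsd; lra. }
      lra.
    + destruct (Rlt_dec (- e) (Phi t - y)) as [Q|Q]; [lra|].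
      exfalso. assert (G (y - e) <= G (Phi t)).
      { destruct (Req_dec (Phi t) (y - e)) as [E|E]; [rewrite E; lra|].
        left. apply Gsd; lra. }
      lra. }
  split; [|exact Hcont].
  apply lim_to_deriv.
  destruct (HH t0 Ht0) as [HdH HK].
  destruct (HG y Hy0) as [HdG Hg].
  set (k := fun h => Phi (t0 + h) - y).
  assert (Hnear : locally' 0 (fun h => 0 < t0 + h < beta)).
  { exists (mkposreal (Rmin t0 (beta - t0)) ltac:(apply Rmin_pos; lra)).
    intros h Hh _. change (Rabs (h - 0) < Rmin t0 (beta - t0)) in Hh. rewrite Rminus_0_r in Hh.
    generalize (Rmin_l t0 (beta - t0)) (Rmin_r t0 (beta - t0)); intros.
    apply Rabs_def2 in Hh. lra. }
  assert (HHne : locally' 0 (fun h => H (t0 + h) <> H t0)).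
  { eapply filter_imp; [|apply (filter_and _ _ Hnear (locally'_not 0))].
    intros h [Hh Hne]. destruct (Rlt_dec 0 h).
    - apply Rgt_not_eq. apply Hsi; lra.
    - apply Rlt_not_eq. apply Hsi; lra. }
  assert (Hkne : locally' 0 (fun h => k h <> 0)).
  { eapply filter_imp; [|apply (filter_and _ _ Hnear HHne)].
    intros h [Hh Hne] Hk. apply Hne. unfold k in Hk.
    destruct (HP (t0 + h) Hh) as [_ E]. rewrite <- E. replace (Phi (t0 + h)) with y by lra. auto. }
  assert (Hk1 : filterlim k (locally' 0) (locally 0)).
  { unfold k. replace 0 with (y - y) at 2 by ring.
    apply (lim_plus (F:=locally' 0)); [|apply lim_const].
    intros Q HQ. apply (Hcont (fun z => Q z)) in HQ.
    destruct HQ as [d Hd]. exists d. intros h Hh _. apply Hd.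
    change (Rabs (t0 + h - t0) < d). replace (t0 + h - t0) with (h - 0) by ring. exact Hh. }
  assert (Hk0 : filterlim k (locally' 0) (locally' 0)).
  { intros P HP'. assert (Hk1' := Hk1 _ HP'). unfold filtermap in *.
    eapply filter_imp; [|exact (filter_and _ _ Hkne Hk1')]. intros h [A B]; auto. }
  assert (HB : filterlim (fun h => (G (y + k h) - G y) / k h) (locally' 0) (locally (- g y))).
  { apply (filterlim_comp _ _ _ k (fun z => (G (y + z) - G y) / z) _ (locally' 0)); auto.
    apply deriv_quot_lim. auto. }
  assert (HA := deriv_quot_lim H t0 (K t0) HdH).
  assert (Hgn : - g y <> 0) by lra.
  assert (HQ := lim_div (F:=locally' 0) _ _ _ _ Hgn HA HB).
  replace (- K t0 / g y) with (K t0 / - g y) by (field; lra).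
  eapply lim_ext; [|exact HQ].
  eapply filter_imp; [|apply (filter_and _ _ Hnear (filter_and _ _ HHne (filter_and _ _ Hkne (locally'_not 0))))].
  intros h (Hh & Hne & Hkn & Hh0).
  destruct (HP (t0 + h) Hh) as [_ E].
  replace (y + k h) with (Phi (t0 + h)) by (unfold k; ring).
  rewrite E, <- HGy. fold y. unfold k in *. field. repeat split; auto.
  rewrite HGy. intro Q. apply Hne. lra.
Qed.

Lemma inv_to_right : filterlim Rinv (Rbar_locally p_infty) (at_right 0).
Proof.
  intros P [eps HP]. exists (/ eps). intros u Hu.
  assert (Hpe := cond_pos eps).
  assert (Hu0 : 0 < u) by (assert (0 < / eps) by (apply Rinv_0_lt_compat; auto); lra).
  apply HP.
  - change (Rabs (/ u - 0) < eps). rewrite Rminus_0_r, Rabs_right.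
    + rewrite <- (Rinv_inv eps). apply Rinv_lt_contravar; auto.
      apply Rmult_lt_0_compat; auto. apply Rinv_0_lt_compat; auto.
    + left; apply Rinv_0_lt_compat; auto.
  - apply Rinv_0_lt_compat; auto.
Qed.

Lemma right_lt (c : R) : 0 < c -> at_right 0 (fun t => 0 < t < c).
Proof.
  intros Hc. exists (mkposreal c Hc). intros t Ht Ht0. change (Rabs (t - 0) < c) in Ht.
  rewrite Rminus_0_r in Ht. apply Rabs_def2 in Ht. lra.
Qed.

Lemma RVn_inv_comp b Q c (K : R -> R) : RVn b Q c -> 0 < b ->
  (forall t, 0 < t -> K t = Q (/ t)) ->
  (forall t, 0 < t < / b -> 0 < K t /\ is_derive K t (- Derive Q (/ t) / (t * t)) /\
      continuous K t /\ continuous (Derive K) t) /\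
  filterlim (LD K) (at_right 0) (locally (- c)).
Proof.
  intros [Q1 Q2] Hb HK.
  assert (Hloc : forall t, 0 < t -> locally t (fun s => Q (/ s) = K s)).
  { intros t Ht. eapply filter_imp; [|apply (loc_gt 0 t Ht)]. intros s Hs. symmetry; auto. }
  assert (Hinv : forall t, 0 < t < / b -> b < / t).
  { intros t Ht. rewrite <- (Rinv_inv b). apply Rinv_lt_contravar; [|lra].
    apply Rmult_lt_0_compat; lra. }
  assert (HD : forall t, 0 < t < / b -> is_derive K t (- Derive Q (/ t) / (t * t))).
  { intros t Ht. destruct (Q1 (/ t) (Hinv t Ht)) as (Qp & Qd & Qc).
    eapply is_derive_ext_loc; [apply Hloc; lra|].
    auto_derive. { repeat split; auto; lra. } eta_fix. field. lra. }
  split.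
  - intros t Ht. destruct (Q1 (/ t) (Hinv t Ht)) as (Qp & Qd & Qc).
    split; [rewrite HK by lra; auto|]. split; [apply HD; auto|]. split.
    + apply exd_cont. eexists; apply HD; auto.
    + eapply continuous_ext_loc.
      * assert (Hl : locally t (fun s => 0 < s < / b)).
        { apply filter_and; [apply loc_gt; lra|apply loc_lt; lra]. }
        eapply filter_imp; [|exact Hl]. intros s Hs. symmetry. apply is_derive_unique. apply HD; auto.
      * apply cont_mult; [apply cont_opp|apply cont_inv; [apply cont_mult; apply cont_id|apply Rgt_not_eq; apply Rmult_lt_0_compat; lra]].
        apply (continuous_comp Rinv (Derive Q)); [apply continuous_Rinv; lra|auto].
  - assert (HL : filterlim (fun t => - LD Q (/ t)) (at_right 0) (locally (- c))).
    { apply (lim_opp (F := at_right 0)). eapply filterlim_comp; [apply filterlim_Rinv_0_right|exact Q2]. }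
    eapply lim_ext; [|exact HL].
    assert (Hr := right_lt (/ b) ltac:(apply Rinv_0_lt_compat; lra)).
    eapply filter_imp; [|exact Hr]. intros t Ht. unfold LD.
    rewrite (is_derive_unique _ _ _ (HD t Ht)). rewrite HK by lra.
    destruct (Q1 (/ t) (Hinv t Ht)) as (Qp & _). field. lra.
Qed.

Lemma RVz_to_RVn (Phi : R -> R) beta c : 0 < beta ->
  (forall t, 0 < t < beta -> 0 < Phi t /\ ex_derive Phi t /\ continuous (Derive Phi) t) ->
  filterlim (LD Phi) (at_right 0) (locally c) ->
  RVn (/ beta) (fun u => Phi (/ u)) (- c).
Proof.
  intros Hb H1 H2.
  assert (Hinv : forall u, / beta < u -> 0 < / u < beta).
  { intros u Hu. assert (0 < / beta) by (apply Rinv_0_lt_compat; lra).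
    split; [apply Rinv_0_lt_compat; lra|].
    rewrite <- (Rinv_inv beta). apply Rinv_lt_contravar; [|lra]. apply Rmult_lt_0_compat; lra. }
  assert (HD : forall u, / beta < u -> is_derive (fun u => Phi (/ u)) u (- Derive Phi (/ u) / (u * u))).
  { intros u Hu. assert (0 < / beta) by (apply Rinv_0_lt_compat; lra).
    destruct (H1 (/ u) (Hinv u Hu)) as (Pp & Pd & Pc).
    auto_derive. { repeat split; auto; lra. } eta_fix. field. lra. }
  split.
  - intros u Hu. assert (0 < / beta) by (apply Rinv_0_lt_compat; lra).
    destruct (H1 (/ u) (Hinv u Hu)) as (Pp & Pd & Pc).
    split; auto. split; [eexists; apply HD; auto|].
    eapply continuous_ext_loc.
    + eapply filter_imp; [|apply (loc_gt (/ beta) u Hu)]. intros s Hs. symmetry.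
      apply is_derive_unique. apply HD; auto.
    + apply cont_mult; [apply cont_opp|apply cont_inv; [apply cont_mult; apply cont_id|apply Rgt_not_eq; apply Rmult_lt_0_compat; lra]].
      apply (continuous_comp Rinv (Derive Phi)); [apply continuous_Rinv; lra|auto].
  - apply (is_lim_ext_loc (fun u => - LD Phi (/ u))).
    + exists (/ beta). intros u Hu. assert (0 < / beta) by (apply Rinv_0_lt_compat; lra).
      destruct (H1 (/ u) (Hinv u Hu)) as (Pp & _).
      assert (E : Derive (fun u0 : R => Phi (/ u0)) u = - Derive Phi (/ u) / (u * u)) by (apply is_derive_unique; apply HD; auto).
      unfold LD. rewrite E. field. split; lra.
    + apply (lim_opp (F := Rbar_locally' p_infty)). eapply filterlim_comp; [apply inv_to_right|exact H2].
Qed.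

Lemma RVn_NSV b f : RVn b f 0 -> NSV_on b f.
Proof.
  intros [H1 H2]. split; [intros; apply H1; auto|]. split; [|exact H2].
  intros u Hu; destruct (H1 u Hu) as (_&A&B); auto.
Qed.

Lemma RVn_ln b f c : RVn b f c -> is_lim (fun u => ln (f u) / ln u) p_infty c.
Proof.
  intros Hf. apply lim_of_eps. intros eps He.
  destruct (RVn_bounds b f c eps Hf He) as [M HM].
  exists (Rmax M 1). intros y Hy.
  assert (Hy1 : 1 < y) by (generalize (Rmax_r M 1); lra).
  assert (HyM : M < y) by (generalize (Rmax_l M 1); lra).
  destruct (HM y HyM) as [A B].
  assert (Hl : 0 < ln y) by (rewrite <- ln_1; apply ln_increasing; lra).
  assert (A' := ln_le _ _ (Rpower_pos y (c - eps)) A).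
  assert (B' := ln_le _ _ (Rlt_le_trans _ _ _ (Rpower_pos y (c - eps)) A) B).
  rewrite ln_Rpower in A', B'.
  assert (Er : ln (f y) = ln (f y) / ln y * ln y) by (field; lra).
  set (r := ln (f y) / ln y) in *.
  apply Rabs_le. split; nra.
Qed.

Section LnStep.
Context {T : Type} {F : (T -> Prop) -> Prop} {FF : Filter F}.
Lemma ln_ratio_step (P Q : T -> R) c : 0 < c ->
  filterlim (fun x => P x / Q x) F (locally c) -> filterlim Q F (Rbar_locally p_infty) ->
  filterlim (fun x => ln (P x) / ln (Q x)) F (locally 1) /\
  filterlim (fun x => ln (Q x)) F (Rbar_locally p_infty).
Proof.
  intros Hc HPQ HQ.
  assert (HlnQ : filterlim (fun x => ln (Q x)) F (Rbar_locally p_infty)).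
  { eapply filterlim_comp; [exact HQ|apply is_lim_ln_p]. }
  split; [|exact HlnQ].
  assert (H1 : filterlim (fun x => ln (P x / Q x)) F (locally (ln c))).
  { eapply filterlim_comp; [exact HPQ|]. apply continuous_ln; auto. }
  assert (H2 : filterlim (fun x => / ln (Q x)) F (locally 0)).
  { eapply filterlim_comp; [exact HlnQ|]. apply (filterlim_Rbar_inv p_infty). discriminate. }
  assert (H3 := lim_plus _ _ _ _ (lim_mult _ _ _ _ H1 H2) (lim_const 1)).
  replace (ln c * 0 + 1) with 1 in H3 by ring.
  eapply lim_ext; [|exact H3].
  assert (E1 : F (fun x => c / 2 < P x / Q x)).
  { apply HPQ. exists (mkposreal (c/2) ltac:(lra)). intros z Hz.
    change (Rabs (z - c) < c / 2) in Hz. apply Rabs_def2 in Hz. lra. }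
  assert (E2 : F (fun x => 1 < Q x)) by (apply HQ; exists 1; auto).
  assert (E3 : F (fun x => 1 < ln (Q x))) by (apply HlnQ; exists 1; auto).
  eapply filter_imp; [|exact (filter_and _ _ E1 (filter_and _ _ E2 E3))].
  intros x (A & B & C).
  assert (HPp : 0 < P x / Q x) by lra.
  assert (E : ln (P x) = ln (P x / Q x) + ln (Q x)) by (rewrite <- ln_mult by lra; f_equal; field; lra).
  cbn beta. rewrite E. field. lra.
Qed.
End LnStep.

Lemma Rpower_2 v : 0 < v -> Rpower v (Ropp 2) = / (v * v).
Proof.
  intros Hv. rewrite Rpower_Ropp. f_equal. unfold Rpower.
  replace (2 * ln v) with (ln v + ln v) by ring. rewrite exp_plus, exp_ln; auto.
Qed.

Theorem lemma3p1 (rho theta A : R) (LL Lf K : R -> R)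
  (Hrho : 0 < rho) (Htheta : 0 <= theta)
  (HLL : C2_on A p_infty LL)
  (HLLinf : is_lim LL p_infty p_infty)
  (HLL' : NRV (-1) (Derive LL))
  (HLf : NSV Lf)
  (HK : NRV0 theta K)
  (HKmono : theta = 0 ->
     exists d, 0 < d /\ forall s1 s2, 0 < s1 -> s1 <= s2 -> s2 < d -> K s1 <= K s2) :
  exists (beta y0 : R) (Phi : R -> R),
    0 < beta /\ A <= y0 /\
    (forall y, y0 < y -> 0 < Derive LL y /\ 0 < Lf y) /\
    (forall t, 0 < t < beta ->
       y0 < Phi t /\ defining_eq rho LL Lf K (Phi t) t /\
       (forall y, y0 < y -> defining_eq rho LL Lf K y t -> y = Phi t)) /\
    C2_on 0 (Finite beta) Phi /\
    filterlim Phi (at_right 0) (Rbar_locally p_infty) /\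
    NRV0 (- (2 * (theta + 1) / rho)) Phi /\
    (forall m : nat, (1 <= m)%nat ->
       filterlim (fun t => log_iter m (Phi t) / log_iter m (/ t)) (at_right 0)
         (Rbar_locally (if Nat.eqb m 1 then 2 * (1 + theta) / rho else 1))) /\
    filterlim (fun t => Phi t * Derive (Derive Phi) t / (Derive Phi t) ^ 2)
      (at_right 0) (Rbar_locally (1 + rho / (2 * (theta + 1)))) /\
    filterlim (fun t => LL (Phi t) / Derive LL (Phi t) * (Phi t / (Derive Phi t) ^ 2))
      (at_right 0) (Rbar_locally 0).
Proof.
  destruct HLL' as (BD & ell & Hell & HDeq).
  destruct HLf as (Bf & HLfN).
  destruct HK as (BK & N & HN & HKeq).
  set (D := Derive LL) in *.
  set (b1 := Rmax (Rmax A 1) (Rmax BD Bf)).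
  assert (Hb1A : A <= b1) by (unfold b1; generalize (Rmax_l (Rmax A 1) (Rmax BD Bf)) (Rmax_l A 1); lra).
  assert (Hb11 : 1 <= b1) by (unfold b1; generalize (Rmax_l (Rmax A 1) (Rmax BD Bf)) (Rmax_r A 1); lra).
  assert (Hb1D : BD <= b1) by (unfold b1; generalize (Rmax_r (Rmax A 1) (Rmax BD Bf)) (Rmax_l BD Bf); lra).
  assert (Hb1f : Bf <= b1) by (unfold b1; generalize (Rmax_r (Rmax A 1) (Rmax BD Bf)) (Rmax_r BD Bf); lra).
  assert (HDr : RVn b1 D (-1)).
  { apply (RVn_ceq _ _ (-1 + 0)); [|ring].
    eapply RVn_mono.
    - eapply RVn_ext; [apply (RVn_Rpower_mul BD ell (-1) 0 (NSV_RVn _ _ Hell))|].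
      intros y Hy. symmetry. apply HDeq. generalize (Rmax_l BD 0); lra.
    - apply Rmax_lub; lra. }
  assert (HLfr : RVn b1 Lf 0) by (eapply RVn_mono; [apply NSV_RVn; exact HLfN|lra]).
  set (g := integrand rho LL Lf).
  set (alpha := 1 + rho / 2).
  assert (Hgr : RVn b1 g (- alpha)).
  { apply (RVn_ceq _ _ ((-1) / 2 + - ((rho + 1) / 2 + 0 / 2))); [|unfold alpha; field].
    eapply RVn_ext.
    - apply RVn_mul; [apply RVn_sqrt; exact HDr|].
      apply RVn_inv. apply RVn_mul; [|apply RVn_sqrt; exact HLfr].
      eapply RVn_mono; [apply RVn_Rpower|lra].
    - intros y Hy. unfold g, integrand. reflexivity. }
  destruct (TI b1 g alpha Hgr ltac:(unfold alpha; lra) ltac:(lra)) as (G & HG1 & HG0 & HGr).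
  set (bK := Rmax BK 1).
  assert (HbK1 : 1 <= bK) by apply Rmax_r.
  assert (HQ : RVn bK (fun v => K (/ v)) (- theta)).
  { apply (RVn_ceq _ _ (- theta + 0)); [|ring].
    eapply RVn_mono.
    - eapply RVn_ext; [apply (RVn_Rpower_mul BK N (- theta) 0 (NSV_RVn _ _ HN))|].
      intros y Hy. symmetry. apply HKeq. generalize (Rmax_l BK 0); lra.
    - apply Rmax_lub; [apply Rmax_l|lra]. }
  set (fK := fun v => K (/ v) / (v * v)).
  assert (HfK : RVn bK fK (- (theta + 2))).
  { apply (RVn_ceq _ _ (- theta + Ropp 2)); [|ring].
    eapply RVn_ext.
    - apply RVn_mul; [exact HQ|]. eapply RVn_mono; [apply RVn_Rpower|lra].
    - intros v Hv. unfold fK. rewrite Rpower_2 by lra. reflexivity. }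
  destruct (TI bK fK (theta + 2) HfK ltac:(lra) ltac:(lra)) as (F & HF1 & HF0 & HFr).
  destruct (RVn_inv_comp bK (fun v => K (/ v)) (- theta) K HQ ltac:(lra)) as [HKp HLDK].
  { intros t Ht. rewrite Rinv_inv. reflexivity. }
  assert (HbKi : 0 < / bK) by (apply Rinv_0_lt_compat; lra).
  assert (Hinvt : forall t, 0 < t < / bK -> bK < / t).
  { intros t Ht. rewrite <- (Rinv_inv bK). apply Rinv_lt_contravar; [|lra].
    apply Rmult_lt_0_compat; lra. }
  set (H := fun t => F (/ t)).
  assert (HHd : forall t, 0 < t < / bK -> is_derive H t (K t)).
  { intros t Ht. unfold H.
    assert (Hc := is_derive_comp F Rinv t (- fK (/ t)) (- / (t * t))).
    assert (E : K t = scal (- / (t*t)) (- fK (/t))).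
    { unfold fK; rewrite !Rinv_inv. change (scal ?a ?b) with (a * b). field; lra. }
    rewrite E. apply Hc.
    - apply HF1. apply Hinvt; auto.
    - auto_derive; lra. }
  assert (HHpos : forall t, 0 < t < / bK -> 0 < H t).
  { intros t Ht. unfold H. apply HF1. apply Hinvt; auto. }
  assert (HH0 : filterlim H (at_right 0) (locally 0)).
  { unfold H. eapply filterlim_comp; [apply filterlim_Rinv_0_right|exact HF0]. }
  set (y0 := b1).
  assert (HGy1 : 0 < G (y0 + 1)) by (apply HG1; unfold y0; lra).
  destruct (lim_ball F 0 (G (y0 + 1)) HF0 HGy1) as [V HV].
  set (Mx := Rmax (Rmax V bK) 1).
  assert (HMxV : V <= Mx) by (unfold Mx; generalize (Rmax_l (Rmax V bK) 1) (Rmax_l V bK); lra).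
  assert (HMxK : bK <= Mx) by (unfold Mx; generalize (Rmax_l (Rmax V bK) 1) (Rmax_r V bK); lra).
  assert (HMx1 : 1 <= Mx) by (unfold Mx; apply Rmax_r).
  set (beta := / Mx).
  assert (Hbeta : 0 < beta) by (apply Rinv_0_lt_compat; lra).
  assert (Hbt : forall t, 0 < t < beta -> Mx < / t).
  { intros t Ht. unfold beta in Ht. rewrite <- (Rinv_inv Mx).
    apply Rinv_lt_contravar; [apply Rmult_lt_0_compat; [lra|]; apply Rinv_0_lt_compat; lra|].
    lra. }
  assert (HtK : forall t, 0 < t < beta -> 0 < t < / bK).
  { intros t Ht. split; [lra|]. assert (bK < / t) by (generalize (Hbt t Ht); lra).
    rewrite <- (Rinv_inv t). apply Rinv_lt_contravar; [|lra].
    apply Rmult_lt_0_compat; [lra|]. apply Rinv_0_lt_compat; lra. }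
  assert (HHlt : forall t, 0 < t < beta -> 0 < H t < G (y0 + 1)).
  { intros t Ht. split; [apply HHpos; auto|].
    generalize (HV (/ t) ltac:(generalize (Hbt t Ht); lra)).
    rewrite Rminus_0_r. intros Q. apply Rabs_def2 in Q. unfold H. lra. }
  assert (Gsd : forall p q, y0 < p -> p < q -> G q < G p).
  { intros p q Hp Hq. apply (sdecr_lemma G (fun z => - g z)); auto.
    - intros x Hx; apply HG1; unfold y0 in *; lra.
    - intros x Hx. destruct Hgr as [Hg1 _]. destruct (Hg1 x ltac:(unfold y0 in *; lra)). lra. }
  assert (Gcont : forall y, y0 < y -> continuity_pt G y).
  { intros y Hy. eapply isd_cont. apply HG1. exact Hy. }
  set (Phi := fun t => epsilon (inhabits 0) (fun y => y0 + 1 < y /\ G y = H t)).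
  assert (HPhi : forall t, 0 < t < beta -> y0 + 1 < Phi t /\ G (Phi t) = H t).
  { intros t Ht. unfold Phi. apply epsilon_spec.
    destruct (HHlt t Ht) as [Ha Hb].
    destruct (IVT_Rbar_incr (fun y => - G y) (y0 + 1) p_infty (- G (y0 + 1)) 0 (- H t))
      as [x (Hx1 & Hx2 & Hx3)].
    - apply (is_lim_continuity (fun y => - G y)). apply continuity_pt_opp. apply Gcont; lra.
    - replace (Finite 0) with (Finite (- 0)) by (f_equal; ring).
      apply (lim_opp (F:=Rbar_locally' p_infty)). exact HG0.
    - intros x Hx _. apply continuity_pt_opp, Gcont. simpl in Hx. lra.
    - simpl; auto.
    - simpl; lra.
    - exists x. simpl in Hx1. split; [lra|]. lra. }
  assert (HPd : forall t, 0 < t < beta -> is_derive Phi t (- K t / g (Phi t)) /\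
                 filterlim Phi (locally t) (locally (Phi t))).
  { apply (inverse_deriv G g H K Phi y0 beta).
    - intros y Hy. split; [apply HG1; auto|]. destruct Hgr as [Hg1 _]. apply Hg1; auto.
    - intros t Ht. split; [apply HHd, HtK; auto|]. apply HKp, HtK; auto.
    - intros t Ht. destruct (HPhi t Ht). split; [lra|auto]. }
  destruct Hgr as [HgD HgLD] eqn:EHgr.
  set (DPhi := fun t => - K t / g (Phi t)).
  assert (HDPhi : forall t, 0 < t < beta -> Derive Phi t = DPhi t).
  { intros t Ht. apply is_derive_unique. apply HPd; auto. }
  assert (HPhiy : forall t, 0 < t < beta -> b1 < Phi t).
  { intros t Ht. destruct (HPhi t Ht). unfold y0 in *. lra. }
  assert (HPc : forall t, 0 < t < beta -> continuous Phi t).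
  { intros t Ht. apply HPd; auto. }
  set (DP2 := fun t => - (Derive K t * g (Phi t) - K t * (Derive g (Phi t) * DPhi t)) /
                        (g (Phi t) * g (Phi t))).
  assert (HDP2 : forall t, 0 < t < beta -> is_derive DPhi t (DP2 t)).
  { intros t Ht. destruct (HKp t (HtK t Ht)) as (Kp & Kd & Kc & KDc).
    destruct (HgD (Phi t) (HPhiy t Ht)) as (gp & gd & gDc).
    destruct (HPd t Ht) as (Pd & _).
    unfold DPhi. auto_derive.
    - split; [eexists; exact Kd|]. split; [exact gd|]. split; [eexists; exact Pd|]. split; [lra|auto].
    - eta_fix. rewrite (HDPhi t Ht). unfold DP2, DPhi. field. lra. }
  assert (HC2 : C2_on 0 (Finite beta) Phi).
  { intros u Hu0 Hub. simpl in Hub.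
    assert (Hu : 0 < u < beta) by lra.
    assert (Hloc : locally u (fun s => 0 < s < beta))
      by (apply filter_and; [apply loc_gt|apply loc_lt]; lra).
    split; [eexists; apply HPd; auto|]. split.
    - eapply ex_derive_ext_loc; [|eexists; apply HDP2; auto].
      eapply filter_imp; [|exact Hloc]. intros s Hs; cbv beta in Hs. symmetry; apply HDPhi; auto.
    - apply (continuous_ext_loc _ DP2).
      + eapply filter_imp; [|exact Hloc]. intros s Hs; cbv beta in Hs.
        symmetry. transitivity (Derive DPhi s).
        * apply Derive_ext_loc.
          assert (Hl : locally s (fun w => 0 < w < beta))
            by (apply filter_and; [apply loc_gt|apply loc_lt]; lra).
          eapply filter_imp; [|exact Hl].
          intros w Hw; cbv beta in Hw. apply HDPhi; auto.
        * apply is_derive_unique, HDP2; auto.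
      + destruct (HKp u (HtK u Hu)) as (Kp & Kd & Kc & KDc).
        destruct (HgD (Phi u) (HPhiy u Hu)) as (gp & gd & gDc).
        assert (cgP : continuous (fun t => g (Phi t)) u).
        { apply (continuous_comp Phi g); [apply HPc; auto|apply exd_cont; auto]. }
        assert (cDgP : continuous (fun t => Derive g (Phi t)) u).
        { apply (continuous_comp Phi (Derive g)); [apply HPc; auto|auto]. }
        assert (cDPhi : continuous DPhi u).
        { unfold DPhi, Rdiv. apply cont_mult; [apply cont_opp; auto|]. apply cont_inv; auto; lra. }
        unfold DP2, Rdiv. apply cont_mult.
        * apply cont_opp. apply (continuous_minus (K:=R_AbsRing) (V:=R_NormedModule)
             (fun t => Derive K t * g (Phi t)) (fun t => K t * (Derive g (Phi t) * DPhi t))).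
          -- apply cont_mult; auto.
          -- apply cont_mult; auto. apply cont_mult; auto.
        * apply cont_inv; [apply cont_mult; auto|]. apply Rgt_not_eq, Rmult_lt_0_compat; lra. }
  assert (HPinf : filterlim Phi (at_right 0) (Rbar_locally p_infty)).
  { intros P [M HM]. change (at_right 0 (fun t => P (Phi t))).
    set (Y := Rmax M (y0 + 1) + 1).
    assert (HY1 : M < Y) by (unfold Y; generalize (Rmax_l M (y0+1)); lra).
    assert (HY2 : y0 + 1 < Y) by (unfold Y; generalize (Rmax_r M (y0+1)); lra).
    assert (HGY : 0 < G Y) by (apply HG1; unfold y0 in *; lra).
    assert (E1 : at_right 0 (fun t => Rabs (H t - 0) < G Y)).
    { apply (HH0 (fun z => Rabs (z - 0) < G Y)). exists (mkposreal (G Y) HGY). intros z Hz; exact Hz. }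
    eapply filter_imp; [|exact (filter_and _ _ E1 (right_lt beta Hbeta))].
    intros t [Ht1 Ht2]. apply HM.
    destruct (HPhi t Ht2) as [Hp1 Hp2].
    rewrite Rminus_0_r in Ht1. apply Rabs_def2 in Ht1.
    destruct (Rlt_dec Y (Phi t)) as [Q|Q]; [lra|]. exfalso.
    assert (G Y <= G (Phi t)).
    { destruct (Req_dec (Phi t) Y) as [E|E]; [rewrite E; lra|]. left. apply Gsd; lra. }
    lra. }
  set (R1 := fun t => Phi t * g (Phi t) / (t * K t)).
  set (L1 := (alpha - 1) * / (theta + 2 - 1)).
  assert (HL1 : 0 < L1).
  { unfold L1, alpha. apply Rmult_lt_0_compat; [lra|apply Rinv_0_lt_compat; lra]. }
  assert (HR1 : filterlim R1 (at_right 0) (locally L1)).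
  { assert (HA : filterlim (fun t => Phi t * g (Phi t) / G (Phi t)) (at_right 0) (locally (alpha - 1))).
    { apply (filterlim_comp _ _ _ Phi (fun y => y * g y / G y) (at_right 0) (Rbar_locally p_infty));
        [exact HPinf|].
      replace (alpha - 1) with (/ / (alpha - 1)) by (rewrite Rinv_inv; auto).
      apply (is_lim_ext_loc (fun y => / (G y / (y * g y))) _ p_infty (Finite (/ / (alpha - 1)))).
      { exists b1. intros y Hy. destruct (HG1 y Hy) as (_ & HGp & _). destruct (HgD y Hy) as (gp & _).
        field. repeat split; lra. }
      apply (lim_inv (F:=Rbar_locally' p_infty)); [|exact HGr].
      apply Rinv_neq_0_compat. unfold alpha; lra. }
    assert (HB : filterlim (fun t => F (/ t) / (/ t * fK (/ t))) (at_right 0)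
                   (locally (/ (theta + 2 - 1)))).
    { apply (filterlim_comp _ _ _ Rinv (fun y => F y / (y * fK y)) (at_right 0) (Rbar_locally p_infty));
        [apply filterlim_Rinv_0_right|exact HFr]. }
    eapply lim_ext; [|exact (lim_mult _ _ _ _ HA HB)].
    eapply filter_imp; [|exact (right_lt beta Hbeta)]. intros t Ht.
    destruct (HPhi t Ht) as [_ HGP]. rewrite HGP. unfold H, R1, fK. rewrite Rinv_inv.
    destruct (HKp t (HtK t Ht)) as (Kp & _).
    assert (HFp : 0 < F (/ t)) by (apply HF1; apply Hinvt; apply HtK; auto).
    field. repeat split; lra. }
  set (a := 2 * (theta + 1) / rho).
  assert (Ha0 : 0 < a) by (unfold a; apply Rdiv_lt_0_compat; lra).
  assert (HaL : / L1 = a) by (unfold L1, a, alpha; field; lra).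
  assert (HLDP : filterlim (LD Phi) (at_right 0) (locally (- a))).
  { rewrite <- HaL. assert (HL1n : L1 <> 0) by lra.
    eapply lim_ext; [|exact (lim_opp _ _ (lim_inv _ _ HL1n HR1))].
    eapply filter_imp; [|exact (right_lt beta Hbeta)]. intros t Ht.
    unfold LD, R1. rewrite (HDPhi t Ht). unfold DPhi.
    destruct (HKp t (HtK t Ht)) as (Kp & _). destruct (HgD (Phi t) (HPhiy t Ht)) as (gp & _).
    assert (0 < Phi t) by (generalize (HPhiy t Ht); lra).
    field. repeat split; lra. }
  assert (HPsi : RVn (/ beta) (fun u => Phi (/ u)) (- - a)).
  { apply RVz_to_RVn; auto.
    intros t Ht. split; [generalize (HPhiy t Ht); lra|]. split; [eexists; apply HPd; auto|].
    apply (continuous_ext_loc _ DPhi).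
    - assert (Hl : locally t (fun w => 0 < w < beta))
        by (apply filter_and; [apply loc_gt|apply loc_lt]; lra).
      eapply filter_imp; [|exact Hl].
      intros w Hw; cbv beta in Hw. symmetry; apply HDPhi; auto.
    - apply exd_cont. eexists; apply HDP2; auto. }
  assert (HKint : forall t, 0 < t < beta -> is_RInt_gen K (at_right 0) (at_point t) (H t)).
  { intros t Ht.
    assert (HDH : forall x, 0 < x < beta -> Derive H x = K x).
    { intros x Hx. apply is_derive_unique. apply HHd, HtK; auto. }
    assert (HI : is_RInt_gen (Derive H) (at_right 0) (at_point t) (H t - 0)).
    { apply is_RInt_gen_Derive.
      - apply (Filter_prod _ _ _ (fun a => 0 < a < t) (fun z => z = t)).
        + exact (right_lt t ltac:(lra)).
        + reflexivity.
        + intros a0 z Ha00 Ez. subst z. simpl. intros x Hx. rewrite Rmin_left, Rmax_right in Hx by lra.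
          eexists. apply HHd. apply HtK. lra.
      - apply (Filter_prod _ _ _ (fun a => 0 < a < t) (fun z => z = t)).
        + exact (right_lt t ltac:(lra)).
        + reflexivity.
        + intros a0 z Ha00 Ez. subst z. simpl. intros x Hx. rewrite Rmin_left, Rmax_right in Hx by lra.
          apply (continuous_ext_loc _ K).
          * assert (Hl : locally x (fun w => 0 < w < beta))
              by (apply filter_and; [apply loc_gt|apply loc_lt]; lra).
            eapply filter_imp; [|exact Hl]. intros w Hw; cbv beta in Hw. symmetry; apply HDH; auto.
          * apply HKp. apply HtK. lra.
      - exact HH0.
      - intros P HP. exact (locally_singleton _ _ HP). }
    replace (H t) with (H t - 0) by ring.
    eapply is_RInt_gen_ext; [|exact HI].
    apply (Filter_prod _ _ _ (fun a => 0 < a < t) (fun z => z = t)).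
    + exact (right_lt t ltac:(lra)).
    + reflexivity.
    + intros a0 z Ha00 Ez. subst z. simpl. intros x Hx. rewrite Rmin_left, Rmax_right in Hx by lra.
      apply HDH. lra. }
  assert (HDT : forall t, 0 < t < beta -> Derive (Derive Phi) t = DP2 t).
  { intros t Ht. transitivity (Derive DPhi t).
    - apply Derive_ext_loc.
      assert (Hl : locally t (fun w => 0 < w < beta))
        by (apply filter_and; [apply loc_gt|apply loc_lt]; lra).
      eapply filter_imp; [|exact Hl]. intros w Hw; cbv beta in Hw. apply HDPhi; auto.
    - apply is_derive_unique, HDP2; auto. }
  exists beta, y0, Phi.
  split; [exact Hbeta|]. split; [unfold y0; lra|].
  split.
  { intros y Hy. split.
    - destruct HDr as [HD1 _]. apply HD1. unfold y0 in Hy; lra.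
    - destruct HLfr as [HL1' _]. apply HL1'. unfold y0 in Hy; lra. }
  split.
  { intros t Ht. destruct (HPhi t Ht) as [Hp1 Hp2]. split; [lra|]. split.
    - exists (H t). split; [|apply HKint; auto].
      rewrite <- Hp2. apply HG1. unfold y0 in Hp1; lra.
    - intros y Hy [I [HI1 HI2]].
      assert (E1 : G y = I).
      { destruct (HG1 y Hy) as (_ & _ & HI3).
        rewrite <- (is_RInt_gen_unique _ _ HI1). rewrite <- (is_RInt_gen_unique _ _ HI3). reflexivity. }
      assert (E2 : H t = I).
      { rewrite <- (is_RInt_gen_unique _ _ HI2). rewrite <- (is_RInt_gen_unique _ _ (HKint t Ht)). reflexivity. }
      destruct (Rtotal_order y (Phi t)) as [Q|[Q|Q]]; auto; exfalso.
      + assert (G (Phi t) < G y) by (apply Gsd; lra). lra.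
      + assert (G y < G (Phi t)) by (apply Gsd; lra). lra. }
  split; [exact HC2|].
  split; [exact HPinf|].
  split.
  { unfold NRV0, NRV. exists (Rmax (/ beta) 0), (fun u => Rpower u (- a) * Phi (/ u)).
    split.
    - apply RVn_NSV. apply (RVn_ceq _ _ (- a + - - a)); [|ring]. apply RVn_Rpower_mul. exact HPsi.
    - intros u Hu. assert (0 < u) by (generalize (Rmax_r (/ beta) 0); lra).
      rewrite <- Rmult_assoc, <- Rpower_plus.
      replace (- - a + - a) with 0 by ring.
      rewrite Rpower_O; [ring|lra]. }
  split.
  { assert (Hlog1 : filterlim (fun t => ln (Phi t) / ln (/ t)) (at_right 0) (locally a)).
    { assert (Hl := RVn_ln _ _ _ HPsi).
      assert (Hc := filterlim_comp _ _ _ Rinv (fun u => ln (Phi (/ u)) / ln u) (at_right 0)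
                     (Rbar_locally p_infty) _ filterlim_Rinv_0_right Hl).
      replace a with (- - a) by ring. eapply lim_ext; [|exact Hc].
      apply filter_forall. intros t. simpl. rewrite Rinv_inv. reflexivity. }
    assert (Hlogs : forall n : nat,
      filterlim (fun t => log_iter (S n) (Phi t) / log_iter (S n) (/ t)) (at_right 0)
        (locally (if Nat.eqb (S n) 1 then a else 1)) /\
      filterlim (fun t => log_iter (S n) (/ t)) (at_right 0) (Rbar_locally p_infty)).
    { induction n as [|n [IH1 IH2]].
      - split; [exact Hlog1|].
        apply (filterlim_comp _ _ _ Rinv ln (at_right 0) (Rbar_locally p_infty));
          [apply filterlim_Rinv_0_right|apply is_lim_ln_p].
      - destruct (ln_ratio_step (F:=at_right 0) (fun t => log_iter (S n) (Phi t))
           (fun t => log_iter (S n) (/ t)) (if Nat.eqb (S n) 1 then a else 1)) as [A1 A2].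
        + destruct n; simpl; lra.
        + exact IH1.
        + exact IH2.
        + split; [exact A1|exact A2]. }
    intros m Hm. destruct m; [lia|]. destruct (Hlogs m) as [A1 _].
    replace (2 * (1 + theta) / rho) with a by (unfold a; field; lra).
    revert A1. destruct (Nat.eqb (S m) 1); intros A1; exact A1. }
  split.
  { assert (HLDg : filterlim (fun t => LD g (Phi t)) (at_right 0) (locally (- alpha))).
    { apply (filterlim_comp _ _ _ Phi (LD g) (at_right 0) (Rbar_locally p_infty)); [exact HPinf|exact HgLD]. }
    assert (HT := lim_plus _ _ _ _ (lim_mult _ _ _ _ (lim_opp _ _ HLDK) HR1) (lim_opp _ _ HLDg)).
    replace (1 + rho / (2 * (theta + 1))) with (- - - theta * L1 + - - alpha)
      by (unfold L1, alpha; field; lra).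
    eapply lim_ext; [|exact HT].
    eapply filter_imp; [|exact (right_lt beta Hbeta)]. intros t Ht.
    rewrite (HDT t Ht), (HDPhi t Ht).
    destruct (HKp t (HtK t Ht)) as (Kp & _). destruct (HgD (Phi t) (HPhiy t Ht)) as (gp & _).
    assert (0 < Phi t) by (generalize (HPhiy t Ht); lra).
    unfold DP2, DPhi, LD, R1. field. repeat split; lra. }
  assert (HyD : RVn b1 (fun y => y * D y) 0).
  { apply (RVn_ceq _ _ (1 + -1)); [|ring].
    eapply RVn_ext.
    - apply RVn_mul; [eapply RVn_mono; [apply RVn_Rpower|lra]|exact HDr].
    - intros y Hy. cbv beta. rewrite Rpower_1 by lra. reflexivity. }
  set (delta := / (a + 1)).
  assert (Hdelta : 0 < delta) by (unfold delta; apply Rinv_0_lt_compat; lra).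
  set (p := delta / 3).
  assert (Hp : 0 < p) by (unfold p; lra).
  destruct (RVn_bounds _ _ _ p HyD Hp) as [M1 HM1].
  set (Y0 := Rmax (Rmax M1 b1) 1 + 1).
  assert (HY0a : M1 < Y0) by (unfold Y0; generalize (Rmax_l (Rmax M1 b1) 1) (Rmax_l M1 b1); lra).
  assert (HY0b : b1 < Y0) by (unfold Y0; generalize (Rmax_l (Rmax M1 b1) 1) (Rmax_r M1 b1); lra).
  set (C := LL Y0 - Rpower Y0 p / p).
  assert (HLLb : forall y, Y0 <= y -> LL y <= C + Rpower y p / p).
  { intros y Hy.
    assert (Hw := decr_lemma (fun z => LL z - Rpower z p / p) (fun z => D z - Rpower z p / z) Y0 y Hy).
    cut (LL y - Rpower y p / p <= LL Y0 - Rpower Y0 p / p); [unfold C; lra|].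
    apply Hw.
    - intros x Hx. apply isd_minus.
      + destruct (HLL x ltac:(lra) I) as [Hx1 _]. apply Derive_correct. exact Hx1.
      + unfold Rpower. auto_derive; [lra|]. field. lra.
    - intros x Hx. destruct (HM1 x ltac:(lra)) as [_ Hu].
      rewrite Rplus_0_l in Hu.
      assert (D x <= Rpower x p / x); [|lra].
      apply (Rmult_le_reg_l x); [lra|]. unfold Rdiv. rewrite <- Rmult_assoc, (Rmult_comm x (Rpower x p)),
        Rmult_assoc, Rinv_r, Rmult_1_r by lra. exact Hu. }
  assert (HZ := ev_inf_gt _ (Rmax (Rmax (2 / p) (2 * Rabs C)) 1) (Rpower_inf p Hp)).
  destruct HZ as [MZ HMZ].
  destruct (ev_inf_gt LL 0 HLLinf) as [ML HML].
  set (Ys := Rmax (Rmax MZ ML) Y0).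
  assert (HYs1 : MZ <= Ys) by (unfold Ys; generalize (Rmax_l (Rmax MZ ML) Y0) (Rmax_l MZ ML); lra).
  assert (HYs2 : ML <= Ys) by (unfold Ys; generalize (Rmax_l (Rmax MZ ML) Y0) (Rmax_r MZ ML); lra).
  assert (HYs3 : Y0 <= Ys) by (unfold Ys; apply Rmax_r).
  assert (HW : forall y, Ys < y -> 0 < LL y / (y * D y) <= Rpower y (3 * p)).
  { intros y Hy.
    assert (HyD0 : 0 < y * D y) by (destruct HyD as [HyD1 _]; apply HyD1; lra).
    assert (HLy : 0 < LL y) by (apply HML; lra).
    split; [apply Rdiv_lt_0_compat; auto|].
    set (z := Rpower y p).
    assert (Hz : Rmax (Rmax (2 / p) (2 * Rabs C)) 1 < z) by (apply HMZ; lra).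
    assert (Hz1 : 2 / p < z) by (generalize (Rmax_l (Rmax (2 / p) (2 * Rabs C)) 1) (Rmax_l (2/p) (2 * Rabs C)); lra).
    assert (Hz2 : 2 * Rabs C < z) by (generalize (Rmax_l (Rmax (2 / p) (2 * Rabs C)) 1) (Rmax_r (2/p) (2 * Rabs C)); lra).
    assert (Hz3 : 1 < z) by (generalize (Rmax_r (Rmax (2 / p) (2 * Rabs C)) 1); lra).
    assert (HLL1 : LL y <= z * z).
    { assert (H1 := HLLb y ltac:(lra)). fold z in H1.
      assert (z / p <= z * z / 2).
      { assert (2 / p * z <= z * z) by nra.
        replace (z / p) with (2 / p * z / 2) by (field; lra). lra. }
      assert (C <= z * z / 2).
      { assert (C <= Rabs C) by apply Rle_abs. nra. }
      lra. }
    assert (HyDl : / (y * D y) <= z).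
    { destruct (HM1 y ltac:(lra)) as [Hl _]. rewrite Rminus_0_l, Rpower_Ropp in Hl.
      fold z in Hl. assert (0 < z) by lra.
      rewrite <- (Rinv_inv z). apply Rinv_le_contravar; auto. apply Rinv_0_lt_compat; lra. }
    replace (Rpower y (3 * p)) with (z * z * z).
    - unfold Rdiv. apply Rmult_le_compat; try lra.
      + left; apply Rinv_0_lt_compat; auto.
    - unfold z. rewrite <- !Rpower_plus. f_equal. ring. }
  destruct (RVn_bounds _ _ _ 1 HPsi Rlt_0_1) as [M2 HM2].
  assert (EvY : at_right 0 (fun t => Ys < Phi t)).
  { apply (HPinf (fun y => Ys < y)). exists Ys; auto. }
  assert (EvM2 : at_right 0 (fun t => M2 < / t)).
  { apply (filterlim_Rinv_0_right (fun u => M2 < u)). exists M2; auto. }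
  assert (Hid : filterlim (fun t : R => t) (at_right 0) (locally 0)).
  { intros P [e He]. exists e. intros y Hy _. apply He. exact Hy. }
  assert (HU := lim_mult _ _ _ _ Hid (lim_mult _ _ _ _ HR1 HR1)).
  rewrite Rmult_0_l in HU.
  apply (filterlim_le_le (F := at_right 0) (fun _ => 0) _ (fun t => t * (R1 t * R1 t))).
  2: apply filterlim_const.
  2: exact HU.
  eapply filter_imp; [|exact (filter_and _ _ (right_lt beta Hbeta) (filter_and _ _ EvY EvM2))].
  intros t (Ht & HtY & HtM).
  assert (Ht0 : 0 < t) by lra.
  rewrite (HDPhi t Ht).
  destruct (HKp t (HtK t Ht)) as (Kp & _). destruct (HgD (Phi t) (HPhiy t Ht)) as (gp & _).
  assert (HP0 : 0 < Phi t) by (generalize (HPhiy t Ht); lra).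
  assert (HDp : 0 < D (Phi t)) by (destruct HDr as [HD1 _]; apply HD1; apply HPhiy; auto).
  assert (E : LL (Phi t) / D (Phi t) * (Phi t / DPhi t ^ 2) =
              LL (Phi t) / (Phi t * D (Phi t)) * (t * t) * (R1 t * R1 t)).
  { unfold DPhi, R1. field. repeat split; lra. }
  rewrite E.
  destruct (HW (Phi t) HtY) as [HW1 HW2].
  assert (HPhiub : Phi t <= Rpower t (- (a + 1))).
  { destruct (HM2 (/ t) HtM) as [_ Hu]. rewrite Rinv_inv in Hu.
    replace (Rpower t (- (a + 1))) with (Rpower (/ t) (- - a + 1)); [exact Hu|].
    unfold Rpower. rewrite ln_Rinv by lra. f_equal. ring. }
  assert (HPp : Rpower (Phi t) (3 * p) <= / t).
  { apply Rle_trans with (Rpower (Rpower t (- (a + 1))) (3 * p)).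
    - apply Rle_Rpower_l; [lra|]. split; auto.
    - rewrite Rpower_mult. replace (- (a + 1) * (3 * p)) with (Ropp 1).
      + rewrite Rpower_Ropp, Rpower_1 by lra. lra.
      + unfold p, delta. field. lra. }
  assert (HR : 0 <= R1 t * R1 t) by nra.
  split.
  - apply Rmult_le_pos; [|exact HR]. apply Rmult_le_pos; [lra|nra].
  - replace (t * (R1 t * R1 t)) with (/ t * (t * t) * (R1 t * R1 t)) by (field; lra).
    apply Rmult_le_compat_r; [exact HR|]. apply Rmult_le_compat_r; [nra|]. lra.
Qed.
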